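(* Let $S$ be as in the context and $1\le k<n$. Let $p_1,\dots,p_r$ be pairwise node-disjoint sequences $p_l=(x_{l,1},\dots,x_{l,w_l})$, $w_l\ge2$, of pairwise distinct nodes of $G_k(S)$ such that for every $1\le t<w_l$, $x_{l,t+1}$ is the only successor of $x_{l,t}$ and $x_{l,t}$ is the only predecessor of $x_{l,t+1}$, and suppose that every fusible edge of $G_k(S)$ is of the form $(x_{l,t},x_{l,t+1})$ for some $l$ and $t$. Let $[i_l,j_l]$ be the $x_{l,w_l}$-interval, so that $\langle w_l-1,[i_l,j_l]\rangle$ is a prefix interval. Let $L'$ be the string obtained from $L$ by deleting every entry at a position of the form $\mathrm{LF}^t[y]$ with $1\le l\le r$, $i_l<y\le j_l$ and $0\le t<w_l-1$ (i.e. the $L$-component of the tunneled BWT obtained by tunneling these prefix intervals). Then $|L'|=m_k$, the number of edges of the edge-reduced de Bruijn graph $\tilde G_k(S)$ counted with multiplicity.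
   Context: $\Sigma$ is a finite totally ordered alphabet containing a symbol $\$$ smaller than every other symbol. $S$ is a string of length $n\ge 2$ over $\Sigma$ whose last character is $\$$ and in which $\$$ occurs nowhere else; strings are indexed from $1$. The rotations of $S$ are the $n$ strings $S[i..n]S[1..i-1]$, $i\in[1,n]$. For $1\le k\le n$ let $Z_k(S)=S[1..n]S[1..k]$. The order-$k$ de Bruijn graph $G_k(S)$ is the directed multigraph with node set $\{Z_k(S)[i..i+k-1]: i\in[1,n]\}$ that, for every $z\in\Sigma^{k+1}$ occurring exactly $m\ge1$ times as a substring of $Z_k(S)$, contains the edge $(z[1..k],z[2..k+1])$ with multiplicity $m$. $x$ is a predecessor of $y$ (and $y$ a successor of $x$) if there is an edge $(x,y)$ of positive multiplicity. An edge $(x,y)$ is fusible if $y$ is the only successor of $x$ and $x$ is the only predecessor of $y$. The edge-reduced de Bruijn graph $\tilde G_k(S)$ is obtained from $G_k(S)$ by setting the multiplicity of every fusible edge to $1$. Let $M$ be the $n\times n$ matrix whose rows (indexed $1,\dots,n$) are the rotations of $S$ sorted lexicographically, and let $L[i]$ be the last character of row $i$ (the BWT of $S$). For $c\in\Sigma$, $C[c]$ is the number of characters of $S$ strictly smaller than $c$, and $\mathrm{rank}_c(L,i)$ is the number of occurrences of $c$ in $L[1..i]$. The LF-mapping is $\mathrm{LF}[i]=C[L[i]]+\mathrm{rank}_{L[i]}(L,i)$, a permutation of $[1,n]$; $\mathrm{LF}^t$ is its $t$-fold iterate ($\mathrm{LF}^0$ the identity) and $\mathrm{LF}^{-1}$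 its inverse. For a string $x$ that is a prefix of some rotation, the $x$-interval is the set of indices of rows of $M$ that begin with $x$ (an interval $[i,j]$). A prefix interval $\langle w,[i,j]\rangle$ consists of an integer $w\ge0$ and an interval $[i,j]\subseteq[1,n]$ such that for every integer $t$ with $-1\le t<w$ the characters $L[\mathrm{LF}^t[i]],\dots,L[\mathrm{LF}^t[j]]$ are all equal. *)

(* Defs.v *)
(* Alphabet = nat with its usual order, the sentinel $ = 0. *)
From mathcomp Require Import all_boot.
Set Implicit Arguments. Unset Strict Implicit. Unset Printing Implicit Defensive.

Fixpoint lexle (s t : seq nat) : bool :=
  match s, t with
  | [::], _ => true
  | _ :: _, [::] => false
  | a :: s', b :: t' => (a < b) || ((a == b) && lexle s' t')
  end.

Definition valid_text (S : seq nat) : Prop :=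
  2 <= size S /\ last 1 S = 0 /\ 0 \notin take (size S).-1 S.

(* 1-indexed substring x[i..i+len-1] *)
Definition substr (x : seq nat) (i len : nat) : seq nat := take len (drop i.-1 x).

Definition rotations (S : seq nat) : seq (seq nat) :=
  [seq rot i.-1 S | i <- iota 1 (size S)].
Definition BWM (S : seq nat) : seq (seq nat) := sort lexle (rotations S).
(* row i of M, 1-indexed *)
Definition row (S : seq nat) (i : nat) : seq nat := nth [::] (BWM S) i.-1.
(* BWT L and L[i], 1-indexed *)
Definition BWT (S : seq nat) : seq nat := [seq last 0 r | r <- BWM S].
Definition Lat (S : seq nat) (i : nat) : nat := nth 0 (BWT S) i.-1.
Definition Ccount (S : seq nat) (c : nat) : nat := count (fun a => a < c) S.
Definition rankc (S : seq nat) (c i : nat) : nat := count (pred1 c) (take i (BWT S)).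
Definition LF (S : seq nat) (i : nat) : nat :=
  Ccount S (Lat S i) + rankc S (Lat S i) i.

(* x-interval [lo,hi]: least and greatest index of a row of M beginning with x *)
Definition begins (x r : seq nat) : bool := take (size x) r == x.
Definition xint_lo (S x : seq nat) : nat := (find (begins x) (BWM S)).+1.
Definition xint_hi (S x : seq nat) : nat :=
  size (BWM S) - find (begins x) (rev (BWM S)).

Definition Zk (S : seq nat) (k : nat) : seq nat := S ++ take k S.
Definition dbg_nodes (S : seq nat) (k : nat) : seq (seq nat) :=
  undup [seq substr (Zk S k) i k | i <- iota 1 (size S)].
Definition mult (S : seq nat) (k : nat) (x y : seq nat) : nat :=
  count (fun i => let z := substr (Zk S k) i k.+1 in
                  (size z == k.+1) && (take k z == x) && (drop 1 z == y))
        (iota 1 (size (Zk S k))).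
Definition is_edge S k x y : bool := 0 < mult S k x y.
Definition only_succ S k (x y : seq nat) : Prop :=
  is_edge S k x y /\ forall y', y' \in dbg_nodes S k -> is_edge S k x y' -> y' = y.
Definition only_pred S k (x y : seq nat) : Prop :=
  is_edge S k x y /\ forall x', x' \in dbg_nodes S k -> is_edge S k x' y -> x' = x.
Definition fusible S k x y : Prop := only_succ S k x y /\ only_pred S k x y.
Definition fusibleb S k x y : bool :=
  [&& is_edge S k x y,
      all (fun y' => is_edge S k x y' ==> (y' == y)) (dbg_nodes S k) &
      all (fun x' => is_edge S k x' y ==> (x' == x)) (dbg_nodes S k)].

Definition mk (S : seq nat) (k : nat) : nat :=
  \sum_(x <- dbg_nodes S k) \sum_(y <- dbg_nodes S k)
     (if fusibleb S k x y then 1 else mult S k x y).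

(* tunneling: positions LF^t[y], i_l < y <= j_l, 0 <= t < w_l - 1, where
   [i_l, j_l] is the x_{l,w_l}-interval *)
Definition deleted (S : seq nat) (P : seq (seq (seq nat))) (q : nat) : bool :=
  has (fun p =>
         let x := last [::] p in
         has (fun y => has (fun t => q == iter t (LF S) y) (iota 0 (size p).-1))
             (iota (xint_lo S x).+1 (xint_hi S x - xint_lo S x)))
      P.
Definition Lprime (S : seq nat) (P : seq (seq (seq nat))) : seq nat :=
  [seq Lat S q | q <- iota 1 (size S) & ~~ deleted S P q].

(* Main.v *)
Require Import Defs.
From mathcomp Require Import all_boot zify.
Set Implicit Arguments. Unset Strict Implicit. Unset Printing Implicit Defensive.

Lemma lexle_refl s : lexle s s.
Proof. by elim: s => //= a s ->; rewrite ltnn eqxx. Qed.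

Lemma lexle_trans x y z : lexle x y -> lexle y z -> lexle x z.
Proof.
elim: x y z => [|a x IH] [|b y] [|c z] //=.
case/orP => [ab|/andP[/eqP eab xy]]; case/orP => [bc|/andP[/eqP ebc yz]].
- by rewrite (ltn_trans ab bc).
- by subst; rewrite ab.
- by subst; rewrite bc.
- by subst; rewrite eqxx (IH _ _ xy yz) orbT.
Qed.

Lemma lexle_transitive : transitive lexle.
Proof. by move=> y x z; apply: lexle_trans. Qed.

Lemma lexle_total : total lexle.
Proof.
elim=> [|a x IH] [|b y] //=.
case: (ltngtP a b) => //= ->; rewrite eqxx /=; exact: IH.
Qed.

Lemma lexle_anti x y : lexle x y -> lexle y x -> x = y.
Proof.
elim: x y => [|a x IH] [|b y] //=.
case/orP => [ab|/andP[/eqP eab xy]]; case/orP => [ba|/andP[/eqP eba yx]].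
- lia.
- lia.
- lia.
- by subst; rewrite (IH _ xy yx).
Qed.

Lemma lexle_rcons a b c : size a = size b ->
  lexle (rcons a c) (rcons b c) = lexle a b.
Proof.
elim: a b => [|x a IH] [|y b] //=; first by rewrite ltnn eqxx.
by case=> sz; rewrite IH.
Qed.

Lemma lexle_prefix m a b c : lexle a b -> lexle b c -> m <= size a ->
  take m a = take m c -> take m b = take m a.
Proof.
elim: m a b c => [|m IH] a b c; first by rewrite !take0.
case: a => [|e a] //; case: b => [|f b] //; case: c => [|g c] //=.
move=> H1 H2 Hs [eg Htc]; subst g.
case/orP: H1 => [ef|/andP[/eqP efe ab]].
  by case/orP: H2 => [fe|/andP[/eqP fe _]]; lia.
subst f; case/orP: H2 => [fe|/andP[_ bc]]; first lia.
by rewrite (IH a b c ab bc Hs Htc).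
Qed.

Lemma map_index_uniq (T : eqType) (s : seq T) :
  uniq s -> [seq index x s | x <- s] = iota 0 (size s).
Proof.
elim: s => [|y s IH] //= /andP[ys us]; rewrite eqxx /=; congr (_ :: _).
have -> : iota 1 (size s) = map (addn 1) (iota 0 (size s)) by rewrite -iotaDl.

rewrite -(IH us) -map_comp; apply/eq_in_map => x xs /=.
by case: eqP => [exy|]; [subst; rewrite xs in ys|].
Qed.

Lemma count_iota_between a b n : a <= b <= n ->
  count (fun m => a <= m < b) (iota 0 n) = b - a.
Proof.
move=> /andP[ab bn].
have -> : n = a + (b - a) + (n - b) by lia.
rewrite !iotaD !count_cat.
rewrite (eq_in_count (a2 := pred0)); last by move=> x; rewrite mem_iota /= => ?; lia.
rewrite (@eq_in_count _ _ predT (iota (0 + a) (b - a))); last by move=> x; rewrite mem_iota /= => ?; lia.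
rewrite (@eq_in_count _ _ pred0 (iota _ (n - b))); last by move=> x; rewrite mem_iota /= => ?; lia.
by rewrite !count_pred0 count_predT size_iota; lia.
Qed.

Lemma count_take_uniq (T : eqType) (P : pred T) (s : seq T) i :
  uniq s -> count P (take i s) = count (fun v => P v && (index v s < i)) s.
Proof.
move=> us.
have -> : count (fun v => P v && (index v s < i)) s = count (fun v => P v && (index v s < i)) (take i s ++ drop i s) by rewrite cat_take_drop.
rewrite count_cat.
have ud : uniq (take i s ++ drop i s) by rewrite cat_take_drop.
rewrite (@eq_in_count _ _ P (take i s)); last first.
  by move=> x xt; rewrite -in_take ?xt ?andbT // (mem_take xt).
rewrite (@eq_in_count _ _ pred0 (drop i s)); last first.
  move=> x xd /=; have xs : x \in s by rewrite -(cat_take_drop i s) mem_cat xd orbT.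
  case: (P x) => //=; rewrite -in_take //; move: ud; rewrite cat_uniq => /and3P[_ /hasPn H _].
  by apply/negbTE; apply: H.
by rewrite count_pred0 addn0.
Qed.

Lemma count_disj (T : Type) (a b : pred T) (s : seq T) :
  (forall x, a x -> b x -> False) -> count (predU a b) s = count a s + count b s.
Proof.
move=> H; rewrite -count_predUI (@eq_count _ (predI a b) pred0) ?count_pred0 ?addn0 //.
by move=> x /=; case Ha: (a x); case Hb: (b x) => //; case: (H x).
Qed.

Section Sorted.
Variable R : seq (seq nat).
Hypothesis sR : sorted lexle R.
Hypothesis uR : uniq R.

Lemma sorted_index u v : u \in R -> v \in R -> lexle v u = (index v R <= index u R).
Proof.
move=> uR' vR'.
have iu : index u R < size R by rewrite index_mem.
have iv : index v R < size R by rewrite index_mem.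
case: leqP => H.
  have := sorted_leq_nth lexle_transitive lexle_refl [::] sR _ _ iv iu H.
  by rewrite !nth_index.
have := sorted_leq_nth lexle_transitive lexle_refl [::] sR _ _ iu iv (ltnW H).
rewrite !nth_index // => Huv; apply/negP => Hvu.
have e := lexle_anti Huv Hvu; subst v; lia.
Qed.

Lemma index_count_lt u : u \in R ->
  index u R = count (fun v => lexle v u && (v != u)) R.
Proof.
move=> uR'.
rewrite (@eq_in_count _ _ (fun v => index v R < index u R)); last first.
  move=> v vR' /=; rewrite sorted_index //.
  have -> : (v != u) = (index v R != index u R).
    apply/idP/idP; apply: contra => /eqP e; apply/eqP => //; last by rewrite e.
    by rewrite -(nth_index [::] vR') e nth_index.
  lia.
rewrite -(count_map (index^~ R) (fun m => m < index u R)) map_index_uniq //.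
rewrite (@eq_count _ _ (fun m => 0 <= m < index u R)) // count_iota_between //.
  by rewrite subn0.
by rewrite /= ltnW // index_mem.
Qed.

End Sorted.

Lemma contig (T : Type) (x0 : T) (s : seq T) (P : pred T) :
  has P s ->
  (forall i j l, i < j -> j < l -> l < size s -> P (nth x0 s i) -> P (nth x0 s l) -> P (nth x0 s j)) ->
  forall m, m < size s -> P (nth x0 s m) = (find P s <= m < size s - find P (rev s)).
Proof.
move=> hP Hc m ms.
have fs : find P s < size s by rewrite -has_find.
have hPr : has P (rev s) by rewrite has_rev.
have gs : find P (rev s) < size (rev s) by rewrite -has_find.
rewrite size_rev in gs.
have Pf := nth_find x0 hP.
have Pg := nth_find x0 hPr; rewrite nth_rev // in Pg.
apply/idP/idP.
  move=> Pm; apply/andP; split.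
    by rewrite leqNgt; apply/negP => H; rewrite (before_find x0 H) in Pm.
  rewrite ltnNge; apply/negP => H.
  have H' : size s - m.+1 < find P (rev s) by lia.
  have := before_find x0 H'; rewrite nth_rev; last lia.
  have -> : size s - (size s - m.+1).+1 = m by lia.
  by rewrite Pm.
move=> /andP[H1 H2].
case: (ltngtP (find P s) m) => [Hfm|Hmf|<-//]; last by lia.
case: (ltngtP m (size s - (find P (rev s)).+1)) => [Hml|?|->//]; last lia.
apply: (Hc _ _ _ Hfm Hml) => //; try lia.
Qed.

Lemma contig_count (T : Type) (x0 : T) (s : seq T) (P : pred T) :
  has P s ->
  (forall i j l, i < j -> j < l -> l < size s -> P (nth x0 s i) -> P (nth x0 s l) -> P (nth x0 s j)) ->
  count P s = size s - find P (rev s) - find P s.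
Proof.
move=> hP Hc.
rewrite -{1}(mkseq_nth x0 s) /mkseq count_map.
rewrite (@eq_in_count _ _ (fun m => find P s <= m < size s - find P (rev s))); last first.
  by move=> m; rewrite mem_iota => /andP[_ ms] /=; rewrite contig.
have fs : find P s < size s by rewrite -has_find.
have hPr : has P (rev s) by rewrite has_rev.
have gs : find P (rev s) < size (rev s) by rewrite -has_find.
rewrite size_rev in gs.
have Pf := nth_find x0 hP.
have Pg := nth_find x0 hPr; rewrite nth_rev // in Pg.
have : find P s <= size s - (find P (rev s)).+1.
  rewrite leqNgt; apply/negP => H.
  by rewrite (before_find x0 H) in Pg.
move=> H; rewrite count_iota_between; lia.
Qed.

Section Rot.
Variable S : seq nat.

Lemma rotationsE : rotations S = [seq rot q S | q <- iota 0 (size S)].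
Proof.
rewrite /rotations.
have -> : iota 1 (size S) = map (addn 1) (iota 0 (size S)) by rewrite -iotaDl.
by rewrite -map_comp.
Qed.

Lemma rotationsP v : reflect (exists2 q, q < size S & v = rot q S) (v \in rotations S).
Proof.
rewrite rotationsE; apply: (iffP mapP) => [[q]|[q]]; rewrite ?mem_iota => qs ->;
  by exists q; rewrite ?mem_iota.
Qed.

Lemma size_rotations v : v \in rotations S -> size v = size S.
Proof. by case/rotationsP => q _ ->; rewrite size_rot. Qed.

Lemma rot1_mem v : v \in rotations S -> rot 1 v \in rotations S.
Proof.
case/rotationsP => q qs ->; apply/rotationsP.
case: (ltngtP q.+1 (size S)) => [H|H|H].
- by exists q.+1 => //; rewrite -rotD ?add1n //; lia.
- lia.
- exists 0; first lia.
  by rewrite rot0 -rotD ?add1n ?H ?rot_size //; lia.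
Qed.

Lemma rotr1_mem v : v \in rotations S -> rotr 1 v \in rotations S.
Proof.
case/rotationsP => q qs ->; apply/rotationsP.
case: q qs => [|q] qs.
  by exists (size S - 1); [lia| rewrite rot0 /rotr].
exists q; first lia.
have -> : rot q.+1 S = rot 1 (rot q S) by rewrite -rotD ?add1n //; lia.
by rewrite rotK.
Qed.

Lemma head_rotations : map (head 0) (rotations S) = S.
Proof.
rewrite rotationsE -map_comp -{3}(mkseq_nth 0 S) /mkseq.
apply/eq_in_map => q; rewrite mem_iota /= => qs.
rewrite /rot; case Hd: (drop q S) => [|a d] /=.
  by move: (size_drop q S); rewrite Hd /=; lia.
by rewrite -[q]addn0 -nth_drop Hd.
Qed.

Lemma uniq_rotations : valid_text S -> uniq (rotations S).
Proof.
case=> n2 [Hl Hz].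
have [s' E] : exists s', S = rcons s' 0.
  move: Hl n2; case/lastP: S => [|s' c] //=.
  by rewrite last_rcons => -> _; exists s'.
have {}Hz : 0 \notin s' by move: Hz; rewrite E size_rcons /= -cats1 take_size_cat.
rewrite rotationsE map_inj_in_uniq ?iota_uniq // => p q.
have key : forall r, r < size S -> index 0 (rot r S) = size s' - r.
  move=> r; rewrite E size_rcons => rs; rewrite /rot -cats1 drop_cat.
  case: ltnP => H.
    rewrite -catA index_cat (negbTE (contra (@mem_drop _ _ _ _) Hz)).
    by rewrite /= ?eqxx addn0 size_drop.
  have -> : r = size s' by lia.
  by rewrite subnn drop0 /= ?eqxx.
rewrite !mem_iota /= => pS qS e.
have := key p pS; rewrite e key //; move: pS qS; rewrite E size_rcons; lia.
Qed.

Definition BW := BWM S.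

Lemma perm_BW : perm_eq BW (rotations S).
Proof. by rewrite /BW /BWM perm_sort. Qed.

Lemma mem_BW v : (v \in BW) = (v \in rotations S).
Proof. exact: (perm_mem perm_BW). Qed.

Lemma sorted_BW : sorted lexle BW.
Proof. exact: (sort_sorted lexle_total). Qed.

Lemma size_BW : size BW = size S.
Proof. by rewrite (perm_size perm_BW) /rotations size_map size_iota. Qed.

Hypothesis vS : valid_text S.

Lemma uniq_BW : uniq BW.
Proof. by rewrite (perm_uniq perm_BW) uniq_rotations. Qed.

Lemma perm_rotrBW : perm_eq (map (rotr 1) BW) BW.
Proof.
apply: uniq_perm; rewrite ?map_inj_uniq ?uniq_BW //; first exact: rotr_inj.
move=> v; apply/mapP/idP => [[w wR ->]|vR].
  by rewrite mem_BW rotr1_mem // -mem_BW.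
by exists (rot 1 v); rewrite ?rotK // mem_BW rot1_mem // -mem_BW.
Qed.

Lemma perm_rotBW : perm_eq (map (rot 1) BW) BW.
Proof.
apply: uniq_perm; rewrite ?map_inj_uniq ?uniq_BW //; first exact: rot_inj.
move=> v; apply/mapP/idP => [[w wR ->]|vR].
  by rewrite mem_BW rot1_mem // -mem_BW.
by exists (rotr 1 v); rewrite ?rotrK // mem_BW rotr1_mem // -mem_BW.
Qed.

Lemma row_index u : u \in BW -> row S (index u BW).+1 = u.
Proof. by move=> uR; rewrite /row /= nth_index. Qed.

Lemma Lat_index u : u \in BW -> Lat S (index u BW).+1 = last 0 u.
Proof.
move=> uR; rewrite /Lat /BWT /= (nth_map [::]) ?index_mem //.
by rewrite nth_index.
Qed.

End Rot.

Section LFs.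
Variable S : seq nat.
Hypothesis vS : valid_text S.
Local Notation R := (BW S).

Lemma sizeS2 : 1 < size S.
Proof. by case: vS. Qed.

Lemma size_BW_elt v : v \in R -> size v = size S.
Proof. by rewrite mem_BW => /size_rotations. Qed.

Lemma lexlt_cons b v c a :
  lexle (b :: v) (c :: a) && (b :: v != c :: a) =
  (b < c) || ((b == c) && (lexle v a && (v != a))).
Proof.
rewrite /= eqseq_cons.
by case: (ltngtP b c) => H /=.
Qed.

Lemma LF_row u : u \in R -> LF S (index u R).+1 = (index (rotr 1 u) R).+1.
Proof.
move=> uR.
have sR := sorted_BW S; have uR' := uniq_BW vS.
have ruR : rotr 1 u \in R by rewrite mem_BW rotr1_mem // -mem_BW.
rewrite (index_count_lt sR uR' ruR).
rewrite /LF Lat_index //.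
have su := size_BW_elt uR.
case/lastP E: u uR su ruR => [|a c] uR su ruR; first by move: su sizeS2 => /= <-.
rewrite last_rcons rotr1_rcons.
rewrite /Ccount -{1}(head_rotations S) count_map -(permP (perm_BW S)).
rewrite /rankc /BWT -map_take count_map count_take_uniq //.
rewrite [in RHS](@eq_in_count _ _ (predU (fun v => head 0 v < c)
     (fun v => (head 0 v == c) && (lexle (behead v) a && (behead v != a))))); last first.
  move=> v vR; have sv := size_BW_elt vR.
  case: v vR sv => [|b v] vR sv; first by move: sv sizeS2 => /= <-.
  by rewrite lexlt_cons.
rewrite count_disj; last by move=> v /= H1 /andP[/eqP H2 _]; lia.
have step2 : count (fun v => (head 0 v == c) && (lexle (behead v) a && (behead v != a))) R =
             count (fun w => (last 0 w == c) && (lexle w (rcons a c) && (w != rcons a c))) R.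
  rewrite -(permP (perm_rotrBW vS)) count_map.
  apply: eq_in_count => w wR /=.
  have sw := size_BW_elt wR.
  case/lastP: w wR sw => [|b d] wR sw; first by move: sw sizeS2 => /= <-.
  rewrite rotr1_rcons last_rcons /= eqseq_rcons.
  case: eqP => [->|] //=.
  rewrite lexle_rcons ?eqxx ?andbT //.
  by move: sw; rewrite size_rcons -su size_rcons => [[]].
rewrite step2.
rewrite [X in _ + X = _](@eq_in_count _ _ (predU (fun w => (last 0 w == c) && (lexle w (rcons a c) && (w != rcons a c)))
            (pred1 (rcons a c)))); last first.
  move=> w wR /=; rewrite ltnS -sorted_index //.
  case: (w =P rcons a c) => [->|ne]; first by rewrite last_rcons eqxx lexle_refl orbT.
  apply/idP/idP.
    by move=> /andP[h1 h2]; apply/orP; left; apply/and3P; split => //; apply/eqP.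
  by move=> /orP[/and3P[h1 h2 _]|/eqP //]; rewrite h1 h2.
rewrite count_disj; last by move=> w /= /andP[_ /andP[_ /eqP H1]] /eqP H2.
by rewrite count_uniq_mem // uR addn1 addnS.
Qed.

End LFs.

Section Graph.
Variable S : seq nat.
Variable k : nat.
Hypothesis vS : valid_text S.
Hypothesis hk : 1 <= k < size S.
Local Notation R := (BW S).
Local Notation N := (dbg_nodes S k).

Lemma substr_rot q m : q < size S -> m <= size S -> m <= k.+1 ->
  substr (Zk S k) q.+1 m = take m (rot q S).
Proof.
move=> qs ms mk; rewrite /substr /Zk /rot /= drop_cat qs !take_cat size_drop.
case: ltnP => // H; congr (_ ++ _).
rewrite -!take_min; congr take; lia.
Qed.

Lemma nodesE : N = undup [seq take k v | v <- rotations S].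
Proof.
rewrite /dbg_nodes rotationsE; congr undup.
have -> : iota 1 (size S) = map (addn 1) (iota 0 (size S)) by rewrite -iotaDl.
rewrite -!map_comp; apply/eq_in_map => q; rewrite mem_iota /= => qs.
rewrite add1n substr_rot //; lia.
Qed.

Lemma node_mem v : v \in R -> take k v \in N.
Proof. by move=> vR; rewrite nodesE mem_undup; apply/mapP; exists v; rewrite -?mem_BW. Qed.

Lemma nodeP x : x \in N -> exists2 v, v \in R & x = take k v.
Proof. by rewrite nodesE mem_undup => /mapP[v vR ->]; exists v; rewrite ?mem_BW. Qed.

Lemma uniq_nodes : uniq N.
Proof. exact: undup_uniq. Qed.

Lemma mult_countE x y : mult S k x y =
  count (fun v => (take k v == x) && (take k (rot 1 v) == y)) R.
Proof.
rewrite (permP (perm_BW S)) /mult size_cat size_takel; last lia.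
rewrite iotaD count_cat.
rewrite (@eq_in_count _ _ pred0 (iota (1 + size S) k)); last first.
  move=> i; rewrite mem_iota => /andP[H1 H2] /=.
  rewrite /substr size_take size_drop size_cat size_takel; last lia.
  case: ltnP => H3; [lia| rewrite eqn_leq; apply/negbTE; lia].
rewrite count_pred0 addn0 rotationsE count_map.
have -> : iota 1 (size S) = map (addn 1) (iota 0 (size S)) by rewrite -iotaDl.
rewrite count_map; apply: eq_in_count => q; rewrite mem_iota /= => qs.
rewrite add1n substr_rot; try lia.
rewrite size_takel ?size_rot ?eqxx /=; last lia.
rewrite -take_min.
have -> : minn k k.+1 = k by lia.
rewrite -[k.+1]addn1 -take_drop.
set v := rot q S.
have sv : size v = size S by rewrite /v size_rot.
rewrite /rot takel_cat // size_drop sv; lia.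
Qed.

Definition occ x := count (fun v => take k v == x) R.

Lemma mult_succ x y : only_succ S k x y -> mult S k x y = occ x.
Proof.
case=> _ H; rewrite mult_countE /occ; apply: eq_in_count => v vR /=.
case: (take k v =P x) => [Hx|//]; subst x => /=.
have vR1 : rot 1 v \in R by rewrite mem_BW rot1_mem // -mem_BW.
apply/eqP; apply: H; first exact: node_mem.
by rewrite /is_edge mult_countE -has_count; apply/hasP; exists v => //; rewrite !eqxx.
Qed.

Lemma mult_pred x y : only_pred S k x y -> mult S k x y = occ y.
Proof.
case=> _ H; rewrite mult_countE /occ -[in RHS](permP (perm_rotBW vS)) count_map.
apply: eq_in_count => v vR /=.
case: (take k (rot 1 v) =P y) => [Hy|]; last by case: eqP; rewrite ?andbF.
subst y; rewrite andbT; apply/eqP; apply: H; first exact: node_mem.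
by rewrite /is_edge mult_countE -has_count; apply/hasP; exists v => //; rewrite !eqxx.
Qed.

Lemma sum_pick (T : eqType) (s : seq T) a (c : nat) : uniq s -> a \in s ->
  \sum_(y <- s) ((a == y) * c) = c.
Proof.
move=> us aS; rewrite (bigD1_seq a) //= eqxx mul1n big1 ?addn0 //.
by move=> y /negbTE; rewrite eq_sym => ->.
Qed.

Lemma sum_mult : \sum_(x <- N) \sum_(y <- N) mult S k x y = size S.
Proof.
under eq_bigr => x _ do under eq_bigr => y _ do
  rewrite mult_countE -sum1_count big_mkcond /=.
under eq_bigr => x _ do rewrite exchange_big.
rewrite exchange_big.
rewrite -(size_BW S) -sum1_size; apply: eq_big_seq => v vR.
have h1 := node_mem vR.
have vR1 : rot 1 v \in R by rewrite mem_BW rot1_mem // -mem_BW.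
have h2 := node_mem vR1.
transitivity (\sum_(x <- N) ((take k v == x) * 1)); last exact: (@sum_pick _ N (take k v) 1 uniq_nodes h1).
apply: eq_bigr => x _.
transitivity (\sum_(y <- N) ((take k (rot 1 v) == y) * ((take k v == x) * 1))); last exact: (@sum_pick _ N (take k (rot 1 v)) ((take k v == x) * 1) uniq_nodes h2).
apply: eq_bigr => y _.
by case: (_ == x); case: (_ == y).
Qed.

End Graph.

Section Paths.
Variable S : seq nat.
Variable k : nat.
Hypothesis vS : valid_text S.
Hypothesis hk : 1 <= k < size S.
Local Notation R := (BW S).
Local Notation N := (dbg_nodes S k).

Lemma size_node x : x \in N -> size x = k.
Proof.
case/(nodeP hk) => v vR ->; rewrite size_takel // (size_BW_elt vR); lia.
Qed.

Section Interval.
Variable x : seq nat.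
Hypothesis xN : x \in N.

Lemma begins_node v : begins x v = (take k v == x).
Proof. by rewrite /begins size_node. Qed.

Lemma hasP_node : has (begins x) R.
Proof.
have [v vR e] := nodeP hk xN; apply/hasP; exists v => //.
by rewrite begins_node e.
Qed.

Lemma contig_node i j l : i < j -> j < l -> l < size R ->
  begins x (nth [::] R i) -> begins x (nth [::] R l) -> begins x (nth [::] R j).
Proof.
move=> ij jl lR; rewrite !begins_node => /eqP Hi /eqP Hl.
have sR := sorted_BW S.
have iR : i < size R by lia.
have jR : j < size R by lia.
have le1 := sorted_leq_nth lexle_transitive lexle_refl [::] sR _ _ iR jR (ltnW ij).
have le2 := sorted_leq_nth lexle_transitive lexle_refl [::] sR _ _ jR lR (ltnW jl).
have si : k <= size (nth [::] R i).
  by rewrite (size_BW_elt (mem_nth _ iR)); lia.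
have := lexle_prefix le1 le2 si.
by rewrite Hi Hl => /(_ erefl) ->.
Qed.

Lemma occ_count : occ S k x = count (begins x) R.
Proof. by apply: eq_count => v; rewrite begins_node. Qed.

Lemma interval_size : xint_hi S x - xint_lo S x = (occ S k x).-1.
Proof.
rewrite occ_count (contig_count hasP_node contig_node) /xint_hi /xint_lo.
rewrite /BW; lia.
Qed.

Lemma interval_rows y : xint_lo S x < y <= xint_hi S x ->
  y.-1 < size R /\ take k (nth [::] R y.-1) = x.
Proof.
rewrite /xint_hi /xint_lo -/(BW S) => H.
have ys : y.-1 < size R by lia.
split => //; apply/eqP; rewrite -begins_node.
rewrite (contig hasP_node contig_node ys); rewrite /BW in H *; lia.
Qed.

End Interval.

Section OnePath.
Variable p : seq (seq nat).
Hypothesis p2 : 2 <= size p.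
Hypothesis pN : all (fun x => x \in N) p.
Hypothesis Hcons : forall t, t.+1 < size p ->
  only_succ S k (nth [::] p t) (nth [::] p t.+1) /\
  only_pred S k (nth [::] p t) (nth [::] p t.+1).

Lemma path_iter u t : u \in R -> take k u = nth [::] p (size p).-1 -> t <= (size p).-1 ->
  [/\ iter t (LF S) (index u R).+1 = (index (iter t (rotr 1) u) R).+1,
      iter t (rotr 1) u \in R &
      take k (iter t (rotr 1) u) = nth [::] p ((size p).-1 - t)].
Proof.
move=> uR hu; elim: t => [|t IH] ht; first by rewrite subn0.
case: IH; first lia.
move=> e1 vR e3; rewrite !iterS e1 (LF_row vS vR).
set v := iter t (rotr 1) u in vR e3 *.
have rvR : rotr 1 v \in R by rewrite mem_BW rotr1_mem // -mem_BW.
split => //.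
have [_ [_ Hp]] := Hcons (t := (size p).-1 - t.+1) ltac:(lia).
rewrite (_ : ((size p).-1 - t.+1).+1 = (size p).-1 - t) in Hp; last lia.
apply: Hp; first exact: node_mem.
rewrite /is_edge mult_countE // -has_count; apply/hasP; exists (rotr 1 v) => //.
by rewrite rotrK e3 !eqxx.
Qed.

Lemma occ_path j : j < size p -> occ S k (nth [::] p j) = occ S k (last [::] p).
Proof.
move=> jp; rewrite -nth_last.
have -> : j = (size p).-1 - ((size p).-1 - j) by lia.
elim: ((size p).-1 - j) (leq_subr j (size p).-1) => [|d IH] hd; first by rewrite subn0.
rewrite -IH; last lia.
have [Hs Hp] := Hcons (t := (size p).-1 - d.+1) ltac:(lia).
have -> : (size p).-1 - d = ((size p).-1 - d.+1).+1 by lia.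
by rewrite -(mult_succ hk Hs) (mult_pred vS hk Hp).
Qed.

Lemma mult_path t : t.+1 < size p ->
  mult S k (nth [::] p t) (nth [::] p t.+1) = occ S k (last [::] p).
Proof.
move=> tp; have [_ Hp] := Hcons tp.
by rewrite (mult_pred vS hk Hp) occ_path.
Qed.

End OnePath.
End Paths.

Lemma iter_rotr_inj t (u v : seq nat) : iter t (rotr 1) u = iter t (rotr 1) v -> u = v.
Proof. by elim: t => //= t IH /rotr_inj /IH. Qed.

Lemma count_mem_sub (s D : seq nat) : uniq s -> uniq D -> {subset D <= s} ->
  count (fun q => q \in D) s = size D.
Proof.
move=> us uD sub; rewrite -size_filter; apply/perm_size/uniq_perm; rewrite ?filter_uniq //.
by move=> x; rewrite mem_filter; apply/andP/idP => [[]//|xD]; split => //; apply: sub.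
Qed.

Lemma fusibleP S k x y : fusibleb S k x y <-> fusible S k x y.
Proof.
split.
  case/and3P => e a1 a2; split; split => // z zN ez.
    by have := allP a1 z zN; rewrite ez => /eqP.
  by have := allP a2 z zN; rewrite ez => /eqP.
case=> [[e H1] [_ H2]]; apply/and3P; split => //; apply/allP => z zN; apply/implyP => ez.
  by rewrite (H1 z zN ez).
by rewrite (H2 z zN ez).
Qed.

Lemma H_sub_lt w t : 1 < w -> w.-1 - t < w.
Proof. lia. Qed.
Lemma H_sub_inj w a b : a < w.-1 -> b < w.-1 -> (w.-1 - a == w.-1 - b) -> a = b.
Proof. lia. Qed.
Lemma H_iota t w : t.+1 < w -> 0 <= t < 0 + w.-1.
Proof. lia. Qed.
Lemma H_iota2 t w : 0 <= t < 0 + w.-1 -> t.+1 < w.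
Proof. lia. Qed.
Lemma H_lt_pred t w : t < 0 + w.-1 -> t < w.
Proof. lia. Qed.
Lemma H_pred m : 0 < m -> 1 + m.-1 = m.
Proof. lia. Qed.

Theorem mainTheorem9 (S : seq nat) (k : nat) (P : seq (seq (seq nat))) :
  valid_text S ->
  1 <= k < size S ->
  (* each p_l has w_l >= 2 pairwise distinct nodes of G_k(S) *)
  (forall p, p \in P -> [/\ 2 <= size p, uniq p & all (fun x => x \in dbg_nodes S k) p]) ->
  (* pairwise node-disjoint *)
  (forall l1 l2, l1 < size P -> l2 < size P -> l1 != l2 ->
     forall x, x \in nth [::] P l1 -> x \notin nth [::] P l2) ->
  (* consecutive nodes: only successor / only predecessor *)
  (forall p, p \in P -> forall t, t.+1 < size p ->
     only_succ S k (nth [::] p t) (nth [::] p t.+1) /\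
     only_pred S k (nth [::] p t) (nth [::] p t.+1)) ->
  (* every fusible edge lies on some p_l *)
  (forall x y, x \in dbg_nodes S k -> y \in dbg_nodes S k -> fusible S k x y ->
     exists2 p, p \in P & exists2 t, t.+1 < size p &
       x = nth [::] p t /\ y = nth [::] p t.+1) ->
  size (Lprime S P) = mk S k.
Proof.
move=> vS hk Hp Hdisj Hcons Hfus.
have uR := uniq_BW vS.
have disj : forall p1 p2 x, p1 \in P -> p2 \in P -> x \in p1 -> x \in p2 -> p1 = p2.
  move=> p1 p2 x h1 h2 x1 x2; apply/eqP; apply/negPn/negP => ne.
  have i1 : index p1 P < size P by rewrite index_mem.
  have i2 : index p2 P < size P by rewrite index_mem.
  have neq : index p1 P != index p2 P.
    by apply: contra ne => /eqP e; rewrite -(nth_index [::] h1) e nth_index.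
  by have := Hdisj _ _ i1 i2 neq x; rewrite !nth_index // => /(_ x1); rewrite x2.
have uP : uniq P.
  apply/(uniqP [::]) => i j hi hj e.
  have pi : nth [::] P i \in P by rewrite mem_nth.
  case: (Hp _ pi) => p2 _ _.
  apply/eqP; apply/negPn/negP => ne.
  have xin : nth [::] (nth [::] P i) 0 \in nth [::] P i by rewrite mem_nth //; lia.
  by have := Hdisj _ _ hi hj ne _ xin; rewrite -e xin.
have lastN : forall p, p \in P -> last [::] p \in dbg_nodes S k /\ last [::] p \in p.
  move=> p pP; case: (Hp _ pP) => p2 _ pN.
  have lp : last [::] p \in p by rewrite -nth_last mem_nth // ltn_predL; apply: leq_trans p2.
  by split => //; apply: (allP pN).
pose lo := fun p : seq (seq nat) => xint_lo S (last [::] p).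
pose hi := fun p : seq (seq nat) => xint_hi S (last [::] p).
pose A := fun p : seq (seq nat) =>
  [seq (y, t) | y <- iota (lo p).+1 (hi p - lo p), t <- iota 0 (size p).-1].
pose Dl := [seq iter yt.2 (LF S) yt.1 | p <- P, yt <- A p].
have kc : forall p (y t : nat), p \in P -> (y, t) \in A p -> t < (size p).-1 /\
    exists u, [/\ u \in BW S, y = (index u (BW S)).+1,
      iter t (LF S) y = (index (iter t (rotr 1) u) (BW S)).+1,
      iter t (rotr 1) u \in BW S &
      take k (iter t (rotr 1) u) = nth [::] p ((size p).-1 - t)].
  move=> p y t pP /allpairsP [[y' t'] [/= yI tI [e1 e2]]]; subst y' t'.
  move: yI tI; rewrite !mem_iota /= => yI tI.
  split; first lia.
  case: (lastN _ pP) => lN _.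
  have yI2 : xint_lo S (last [::] p) < y <= xint_hi S (last [::] p). move: yI; rewrite /lo /hi /=. lia.
  have [ys hu] := interval_rows hk lN yI2.
  set u := nth [::] (BW S) y.-1 in hu.
  have uR' : u \in BW S by rewrite mem_nth.
  have iu : index u (BW S) = y.-1 by rewrite index_uniq.
  case: (Hp _ pP) => p2 _ pN.
  have [e1 e2 e3] := path_iter vS hk p2 pN (Hcons p pP) (t := t) uR' ltac:(by rewrite hu nth_last) ltac:(lia).
  exists u; split => //; first by rewrite iu; lia.
  by rewrite -e1 iu; congr iter; lia.
have Dl_sub : {subset Dl <= iota 1 (size S)}.
  move=> q /allpairsPdep [p [[y t] [pP ytA ->]]].
  have [_ [u [_ _ e1 vR _]]] := kc p y t pP ytA.
  rewrite /= e1 mem_iota /= add1n ltnS -(size_BW S) index_mem //.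
have Dl_uniq : uniq Dl.
  apply: allpairs_uniq_dep => //.
    move=> p _; apply: allpairs_uniq; rewrite ?iota_uniq //.
    by move=> [a b] [c d] _ _ /= [-> ->].
  move=> z1 z2 /allpairsPdep [p1 [[y1 t1] [p1P a1 ->]]] /allpairsPdep [p2 [[y2 t2] [p2P a2 ->]]] /= e.
  have [tl1 [u1 [uR1 ey1 f1 vR1 g1]]] := kc p1 y1 t1 p1P a1.
  have [tl2 [u2 [uR2 ey2 f2 vR2 g2]]] := kc p2 y2 t2 p2P a2.
  rewrite f1 f2 in e; case: e => /(congr1 (fun i => nth [::] (BW S) i)).
  rewrite !nth_index // => ev.
  case: (Hp _ p1P) => p12 up1 _.
  have m1 : take k (iter t1 (rotr 1) u1) \in p1 by rewrite g1 mem_nth // H_sub_lt.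
  have m2 : take k (iter t1 (rotr 1) u1) \in p2.
    by rewrite ev g2 mem_nth // H_sub_lt //; case: (Hp _ p2P).
  have ep := disj _ _ _ p1P p2P m1 m2; subst p2.
  have et : t1 = t2.
    move: g1; rewrite ev g2 => /eqP; rewrite nth_uniq ?H_sub_lt //.
    by move=> e'; apply/esym; exact: (H_sub_inj tl2 tl1 e').
  subst t2.
  have eu := iter_rotr_inj ev; subst u2.
  have ey : y1 = y2 by rewrite ey1 ey2.
  by rewrite ey.
have del : forall q, deleted S P q = (q \in Dl).
  move=> q; rewrite /deleted; apply/hasP/allpairsPdep.
    move=> [p pP /= /hasP [y yI /hasP [t tI /eqP ->]]].
    by exists p, (y, t); split => //; apply/allpairsP; exists (y, t).
  move=> [p [[y t] [pP /allpairsP [[y' t'] [yI tI [e1 e2]]] ->]]]; subst y' t'.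
  exists p => //=; apply/hasP; exists y => //; apply/hasP; exists t => //.
have cntD : count (deleted S P) (iota 1 (size S)) = size Dl.
  rewrite (eq_count del); exact: count_mem_sub (iota_uniq _ _) Dl_uniq Dl_sub.
have sizeD : size Dl = \sum_(p <- P) (hi p - lo p) * (size p).-1.
  by rewrite size_allpairs_dep sumnE big_map; apply: eq_bigr => p _; rewrite size_allpairs !size_iota.
have LP : size (Lprime S P) + size Dl = size S.
  rewrite /Lprime size_map size_filter -cntD addnC.
  by rewrite (count_predC (deleted S P)) size_iota.
pose N := dbg_nodes S k.
pose Ed := [seq (nth [::] p t, nth [::] p t.+1) | p <- P, t <- iota 0 (size p).-1].
have Ed_uniq : uniq Ed.
  apply: allpairs_uniq_dep => //; first by move=> p _; apply: iota_uniq.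
  move=> z1 z2 /allpairsPdep [p1 [t1 [p1P a1 ->]]] /allpairsPdep [p2 [t2 [p2P a2 ->]]] /= [e _].
  move: a1 a2; rewrite !mem_iota /= => a1 a2.
  case: (Hp _ p1P) => p12 up1 _.
  have m1 : nth [::] p1 t1 \in p1 by rewrite mem_nth //; exact: leq_trans a1 (leq_pred _).
  have m2 : nth [::] p1 t1 \in p2 by rewrite e mem_nth //; exact: leq_trans a2 (leq_pred _).
  have ep := disj _ _ _ p1P p2P m1 m2; subst p2.
  have et : t1 = t2.
    by move: e => /eqP; rewrite nth_uniq ?(H_lt_pred a1) ?(H_lt_pred a2) // => /eqP.
  by subst t2.
have permE : perm_eq [seq e <- [seq (x, y) | x <- N, y <- N] | fusibleb S k e.1 e.2] Ed.
  apply: uniq_perm => //.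
    rewrite filter_uniq // allpairs_uniq ?undup_uniq //.
    by move=> [a b] [c d] _ _ /= [-> ->].
  move=> [x y]; rewrite mem_filter /=; apply/andP/idP.
    move=> [/fusibleP fb /allpairsP [[x' y'] [/= xN yN [e1 e2]]]]; subst x' y'.
    have [p pP [t tp [-> ->]]] := Hfus x y xN yN fb.
    apply/allpairsPdep; exists p, t; split => //; rewrite mem_iota; exact: H_iota.
  move=> /allpairsPdep [p [t [pP tI [-> ->]]]].
  move: tI; rewrite mem_iota /= => tI.
  case: (Hp _ pP) => p2 _ pN.
  have tI2 := H_iota2 tI.
  have [Hs Hpr] := Hcons p pP t tI2.
  split; first by have := proj2 (fusibleP S k _ _) (conj Hs Hpr).
  apply/allpairsP; exists (nth [::] p t, nth [::] p t.+1); split => //=; apply: (allP pN); rewrite mem_nth //; exact: ltnW.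
have H1 : mk S k + \sum_(x <- N) \sum_(y <- N) (if fusibleb S k x y then (mult S k x y).-1 else 0) = size S.
  rewrite -(sum_mult hk) /mk -big_split; apply: eq_bigr => x _.
  rewrite -big_split; apply: eq_bigr => y _ /=.
  case: ifP => [|_]; last by rewrite addn0.
  rewrite /fusibleb => /and3P [e _ _]; rewrite /is_edge in e; exact: H_pred.
have H2 : \sum_(x <- N) \sum_(y <- N) (if fusibleb S k x y then (mult S k x y).-1 else 0) =
          \sum_(p <- P) (hi p - lo p) * (size p).-1.
  transitivity (\sum_(e <- [seq (x, y) | x <- N, y <- N])
                 (if fusibleb S k e.1 e.2 then (mult S k e.1 e.2).-1 else 0)).
    by rewrite big_allpairs.
  rewrite -big_mkcond -big_filter (perm_big _ permE) big_allpairs_dep /=.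
  apply: eq_big_seq => p pP.
  case: (Hp _ pP) => p2 _ pN.
  case: (lastN _ pP) => lN _.
  rewrite (interval_size hk lN).
  rewrite (eq_big_seq (fun _ => (occ S k (last [::] p)).-1)); last first.
    move=> t; rewrite mem_iota /= => tI.
    by rewrite (mult_path vS hk p2 pN (Hcons p pP)) //; exact: H_iota2.
  by rewrite big_const_seq count_predT size_iota iter_addn_0 mulnC.
rewrite H2 -sizeD in H1; clear -H1 LP; lia.
Qed.
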